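(* Let $d=1$ and let $\mathcal{U}$ be an update family on $\mathbb{Z}$ for which $-1$ is a stable direction (i.e. no $X\in\mathcal{U}$ satisfies $X\subset\{1,2,3,\dots\}$). Let $n\ge1$ and assume $\mathcal{H}_{n-1}$ holds. Then for every $\Lambda\subset\mathbb{Z}$ with $\mathcal{P}_n\subset\Lambda$ and every $\eta\in V(n,\Lambda)\setminus\{1_\Lambda\}$, $\eta$ has at least one zero in $\Lambda\setminus\mathcal{P}_{n-1}$.
   Context: An update family is a set $\mathcal{U}$ of finitely many finite nonempty subsets of $\mathbb{Z}\setminus\{0\}$. For $\Lambda\subset\mathbb{Z}$, configurations are elements of $\{0,1\}^\Lambda$; $1_\Lambda$ is the all-ones configuration; $\eta^s$ is $\eta$ with the state at $s$ flipped. A move from $\eta$ to $\eta'$ is legal if $\eta'=\eta$, or $\eta'=\eta^s$ for some $s\in\Lambda$ and some $X\in\mathcal{U}$ has all sites of $s+X$ in state $0$ in the configuration equal to $\eta$ on $\Lambda$ and $0$ outside $\Lambda$. A legal path is a finite sequence $(\eta^j)_{0\le j\le m}$, $m\ge 1$, with all consecutive moves legal; it is $n$-legal if every $\eta^j$ has at most $n$ zeroes in $\Lambda$. $V(n,\Lambda)$ is the set of configurations reachable from $1_\Lambda$ by an $n$-legal path. Let $r=\max\{|x-y| : x,y\in X\cup\{0\}, X\in\mathcal{U}\}$, and for $n\in\mathbb{N}$ let $a_n=r(2^n-1)$, $b_n=rn2^{n-1}$, $\mathcal{P}_n=\{-a_n,\dots,b_n\}$. $\mathcal{H}_n$ denotes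 the statement: for every $\Lambda\subset\mathbb{Z}$ with $\mathcal{P}_n\subset\Lambda$ and every $\eta\in V(n,\Lambda)$, $\eta_0=1$. *)

(* Defs.v *)
From Stdlib Require Import ZArith List.
Import ListNotations.
Open Scope Z_scope.

Definition update_family (U : list (list Z)) : Prop :=
  forall X, In X U -> X <> [] /\ ~ In 0 X.

(* Configurations on Lambda are represented by functions Z -> bool
   (true = state 1, false = state 0); only values on Lambda matter.
   Paths start from the constant-true function and only flip sites in
   Lambda, so reachable configurations are 1 outside Lambda. *)
Definition config := Z -> bool.

Definition ones : config := fun _ => true.

Definition flip (eta : config) (s : Z) : config :=
  fun x => if Z.eqb x s then negb (eta x) else eta x.

(* site y is in state 0 in the configuration equal to eta on Lambda and
   0 outside Lambda *)
Definition zero_ext (Lam : Z -> Prop) (eta : config) (y : Z) : Prop :=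
  Lam y -> eta y = false.

Definition legal_move (U : list (list Z)) (Lam : Z -> Prop)
    (eta eta' : config) : Prop :=
  eta' = eta \/
  exists s, Lam s /\ eta' = flip eta s /\
    exists X, In X U /\ forall x, In x X -> zero_ext Lam eta (s + x).

Definition at_most_zeros (n : nat) (Lam : Z -> Prop) (eta : config) : Prop :=
  exists l : list Z, (length l <= n)%nat /\
    forall x, Lam x -> eta x = false -> In x l.

Definition V (U : list (list Z)) (n : nat) (Lam : Z -> Prop) (eta : config) : Prop :=
  exists (m : nat) (p : nat -> config),
    (1 <= m)%nat /\ p 0%nat = ones /\ p m = eta /\
    (forall j, (j < m)%nat -> legal_move U Lam (p j) (p (S j))) /\
    (forall j, (j <= m)%nat -> at_most_zeros n Lam (p j)).

Definition maxl (l : list Z) : Z := fold_right Z.max 0 l.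

(* r = max { |x - y| : x, y in X u {0}, X in U } *)
Definition range_r (U : list (list Z)) : Z :=
  maxl (map (fun X => maxl (map (fun x => maxl (map (fun y => Z.abs (x - y)) (0 :: X))) (0 :: X))) U).

Definition a_n (U : list (list Z)) (n : nat) : Z :=
  range_r U * (2 ^ Z.of_nat n - 1).

Definition b_n (U : list (list Z)) (n : nat) : Z :=
  range_r U * Z.of_nat n * 2 ^ (Z.of_nat n - 1).

Definition P (U : list (list Z)) (n : nat) (x : Z) : Prop :=
  - a_n U n <= x <= b_n U n.

Definition H (U : list (list Z)) (n : nat) : Prop :=
  forall Lam : Z -> Prop, (forall x, P U n x -> Lam x) ->
    forall eta, V U n Lam eta -> eta 0 = true.

Definition neg1_stable (U : list (list Z)) : Prop :=
  ~ exists X, In X U /\ forall x, In x X -> 0 < x.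

(* Main.v *)
Require Import Defs.
From Stdlib Require Import ZArith List Classical Lia.
Import ListNotations.
Open Scope Z_scope.

Definition emove (r : Z) (D : Z -> Prop) (q q' : config) : Prop :=
  (forall x, D x -> q' x = q x) \/
  exists s, D s /\ (forall x, D x -> q' x = if Z.eqb x s then negb (q x) else q x) /\
    exists d, 1 <= d <= r /\ (D (s - d) -> q (s - d) = false).

Definition epath r D k (q : nat -> config) (m : nat) :=
  (forall j, (j < m)%nat -> emove r D (q j) (q (S j))) /\
  (forall j, (j <= m)%nat -> at_most_zeros k D (q j)).

Definition eones (D : Z -> Prop) (q : config) := forall x, D x -> q x = true.

Fixpoint A (r : Z) (k : nat) : Z := match k with O => 0 | S k => 2 * A r k + r end.

Lemma A_nonneg r k : 0 <= r -> 0 <= A r k.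
Proof. intros Hr; induction k as [|k IH]. simpl; lia. change (A r (S k)) with (2 * A r k + r); lia. Qed.

Lemma emove_sym r D q q' : emove r D q q' -> emove r D q' q.
Proof.
  intros [H|[s [Ds [Hf [d [Hd Hc]]]]]].
  - left; intros x Dx; rewrite H; auto.
  - right; exists s; split; auto; split.
    + intros x Dx; rewrite (Hf x Dx); destruct (Z.eqb x s); auto.
      destruct (q x); auto.
    + exists d; split; auto; intros D'. rewrite (Hf _ D').
      replace (Z.eqb (s - d) s) with false by (symmetry; apply Z.eqb_neq; lia). auto.
Qed.

Lemma emove_sub r D D' q q' : (forall x, D' x -> D x) -> emove r D q q' -> emove r D' q q'.
Proof.
  intros Hs [H|[s [Ds [Hf [d [Hd Hc]]]]]].
  - left; auto.
  - destruct (classic (D' s)) as [D's|nD's].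
    + right; exists s; split; auto; split; auto. exists d; auto.
    + left; intros x Dx. rewrite (Hf x (Hs x Dx)).
      replace (Z.eqb x s) with false; auto. symmetry; apply Z.eqb_neq; intro; subst; auto.
Qed.

Lemma amz_sub k D D' q : (forall x, D' x -> D x) -> at_most_zeros k D q -> at_most_zeros k D' q.
Proof. intros Hs [l [Hl Hi]]; exists l; split; auto. Qed.

Lemma amz_remove k D D' q y : (forall x, D' x -> D x /\ x <> y) -> D y -> q y = false ->
  at_most_zeros (S k) D q -> at_most_zeros k D' q.
Proof.
  intros Hs Dy qy [l [Hl Hi]].
  exists (remove Z.eq_dec y l). split.
  - pose proof (remove_length_lt Z.eq_dec l y (Hi y Dy qy)). lia.
  - intros x D'x qx. destruct (Hs x D'x). apply in_in_remove; auto.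
Qed.

Lemma epath_restrict r D D' k k' q m : epath r D k q m -> (forall x, D' x -> D x) ->
  (forall j, (j <= m)%nat -> at_most_zeros k' D' (q j)) -> epath r D' k' q m.
Proof.
  intros [Hm Hc] Hs Hc'. split; auto.
  intros j Hj; eapply emove_sub; eauto.
Qed.

Lemma epath_rev r D k q m a b : epath r D k q m -> (a <= b <= m)%nat ->
  epath r D k (fun t => q (b - t)%nat) (b - a).
Proof.
  intros [Hm Hc] Hab. split.
  - intros t Ht. apply emove_sym.
    replace (b - t)%nat with (S (b - S t)) by lia. apply Hm. lia.
  - intros t Ht. apply Hc. lia.
Qed.

Lemma epath_shift r D k q m a b : epath r D k q m -> (a <= b <= m)%nat ->
  epath r D k (fun t => q (a + t)%nat) (b - a).
Proof.
  intros [Hm Hc] Hab. split.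
  - intros t Ht. replace (a + S t)%nat with (S (a + t)) by lia. apply Hm. lia.
  - intros t Ht. apply Hc. lia.
Qed.

Lemma last_time (P : nat -> Prop) j : P 0%nat -> ~ P j ->
  exists tau, (tau < j)%nat /\ P tau /\ forall t, (tau < t <= j)%nat -> ~ P t.
Proof.
  induction j; intros H0 Hj. contradiction.
  destruct (classic (P j)) as [Pj|nPj].
  - exists j; split; [lia|split; auto]. intros t Ht. replace t with (S j) by lia; auto.
  - destruct (IHj H0 nPj) as [tau [H1 [H2 H3]]]. exists tau; split; [lia|split; auto].
    intros t Ht. destruct (Nat.eq_dec t (S j)). subst; auto. apply H3; lia.
Qed.

Lemma leftmost (f : Z -> bool) c : forall N y, c <= y -> y - c < Z.of_nat N -> f y = true ->
  exists y0, c <= y0 <= y /\ f y0 = true /\ forall x, c <= x < y0 -> f x = false.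
Proof.
  induction N; intros y Hc HN Hf. simpl in HN; lia.
  destruct (classic (exists x, c <= x < y /\ f x = true)) as [[x [Hx Fx]]|Hn].
  - destruct (IHN x) as [y0 [H1 [H2 H3]]]; try lia; auto. exists y0; split; [lia|auto].
  - exists y; split; [lia|split; auto]. intros x Hx. destruct (f x) eqn:E; auto.
    exfalso; apply Hn; eauto.
Qed.

Definition RR r k := forall D c q m, (forall x, D x -> c <= x) -> epath r D k q m ->
  eones D (q 0%nat) -> forall j z, (j <= m)%nat -> (forall x, c <= x <= z -> D x) ->
  q j z = false -> z <= c - 1 + A r k.

Definition LL r k := forall D c q m, (forall x, D x -> c <= x) -> epath r D (S k) q m ->
  eones D (q 0%nat) -> forall j y, (j <= m)%nat -> c <= y -> (forall x, c <= x <= y -> D x) ->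
  q j y = false -> exists v, c <= v <= c - 1 + A r k + r /\ v <= y /\ q j v = false.

Lemma RR0 r : RR r 0.
Proof.
  intros D c q m Dc [Hm Hc] H0 j z Hj Hz Hq.
  destruct (Hc j Hj) as [l [Hl Hi]].
  destruct (Z_lt_le_dec z c). simpl; lia.
  destruct l as [|a l].
  - exfalso; apply (Hi z); auto. apply Hz; lia.
  - simpl in Hl. lia.
Qed.

Lemma L_of_R r k : 0 <= r -> RR r k -> LL r k.
Proof.
  intros Hr HR D c q m Dc Hp H0 j y Hj Hcy Hy Hq.
  pose proof (A_nonneg r k Hr) as HA.
  destruct (leftmost (fun x => negb (q j x)) c (S (Z.to_nat (y - c))) y Hcy ltac:(lia))
    as [y0 [Hy0 [Hf0 Hl0]]]. { rewrite Hq; auto. }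
  apply Bool.negb_true_iff in Hf0.
  destruct (Z_le_gt_dec y0 (c - 1 + A r k + r)) as [Hle|Hgt].
  { exists y0; auto. split; [lia|split; [lia|auto]]. }
  exfalso.
  assert (Dy0 : D y0) by (apply Hy; lia).
  destruct (last_time (fun t => q t y0 = true) j) as [sig [Hs1 [Hs2 Hs3]]].
  { apply H0; auto. } { rewrite Hf0; discriminate. }
  destruct Hp as [Hm Hc].
  destruct (Hm sig ltac:(lia)) as [Hid|[s [Ds [Hf [d [Hd Hcd]]]]]].
  { apply (Hs3 (S sig)); [lia|]. rewrite Hid; auto. }
  destruct (Z.eq_dec y0 s) as [<-|Hne].
  2: { apply (Hs3 (S sig)); [lia|]. rewrite Hf; auto.
       replace (Z.eqb y0 s) with false; auto. symmetry; apply Z.eqb_neq; auto. }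
  set (w := y0 - d) in *.
  assert (Dw : D w) by (apply Hy; unfold w; lia).
  specialize (Hcd Dw).
  assert (Hw1 : q (S sig) w = false).
  { rewrite Hf; auto. replace (Z.eqb w y0) with false; auto.
    symmetry; apply Z.eqb_neq; unfold w; lia. }
  set (D' := fun x => D x /\ x < y0).
  assert (Hp' : epath r D' k (fun t => q (j - t)%nat) (j - S sig)).
  { apply epath_restrict with (D := D) (k := S k).
    - apply (epath_rev r D (S k) q m); [split; auto|lia].
    - intros x [Dx _]; auto.
    - intros t Ht. apply amz_remove with (D := D) (y := y0); auto.
      + intros x [Dx Hx]; split; auto; lia.
      + destruct (Nat.eq_dec (j - t) j) as [E|E].
        * rewrite E; auto.
        * apply Bool.not_true_is_false. apply Hs3. lia.
      + apply Hc. lia. }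
  assert (Hz : w <= c - 1 + A r k).
  { apply (HR D' c _ _ (fun x Hx => Dc x (proj1 Hx)) Hp') with (j := (j - S sig)%nat); auto.
    - intros x [Dx Hx]. cbn beta. replace (j - 0)%nat with j by lia.
      pose proof (Hl0 x ltac:(split; [now apply Dc|lia])) as E.
      destruct (q j x); auto.
    - intros x Hx. split; [apply Hy; unfold w in *; lia|unfold w in *; lia].
    - replace (j - (j - S sig))%nat with (S sig) by lia. auto. }
  unfold w in Hz. lia.
Qed.

Lemma R_S r k : 0 <= r -> RR r k -> RR r (S k).
Proof.
  intros Hr HR D c q m Dc Hp H0 j z Hj Hz Hq.
  pose proof (A_nonneg r k Hr) as HA.
  change (A r (S k)) with (2 * A r k + r).
  set (B := c - 1 + A r k + r).
  destruct (Z_le_gt_dec z B) as [Hle|Hgt]. { unfold B in *; lia. }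
  set (D0 := fun x => c <= x <= z).
  assert (Hp0 : epath r D0 (S k) q m).
  { apply epath_restrict with (D := D) (k := S k); auto.
    intros t Ht. apply amz_sub with (D := D); auto. apply Hp; auto. }
  assert (HL := L_of_R r k Hr HR).
  destruct (last_time (fun t => eones D0 (q t)) j) as [tau [Ht1 [Ht2 Ht3]]].
  { intros x Hx; apply H0; apply Hz; auto. }
  { intro E. rewrite (E z) in Hq; [discriminate|]. unfold D0; lia. }
  assert (Hzero : forall t, (tau < t <= j)%nat -> exists v, c <= v <= B /\ D0 v /\ q t v = false).
  { intros t Htt. pose proof (Ht3 t Htt) as NE.
    apply not_all_ex_not in NE. destruct NE as [y NE].
    assert (D0 y /\ q t y = false) as [Dy qy].
    { destruct (classic (D0 y)); [split; auto|]. 2: (exfalso; apply NE; intro; contradiction).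
      apply Bool.not_true_is_false; intro; apply NE; auto. }
    assert (Htm : (t <= m)%nat) by lia.
    assert (Hcy : c <= y) by (unfold D0 in Dy; lia).
    assert (Hint : forall x, c <= x <= y -> D0 x) by (intros x Hx; unfold D0 in *; lia).
    destruct (HL D0 c q m (fun x Hx => proj1 Hx) Hp0 (fun x Hx => H0 x (Hz x Hx)) t y Htm Hcy Hint qy)
      as [v [Hv1 [Hv2 Hv3]]].
    exists v; split; [unfold B; lia|split; auto]. unfold D0 in *; lia. }
  destruct Hp0 as [Hm0 Hc0].
  assert (Hones : eones (fun x => B < x <= z) (q (S tau))).
  { destruct (Hm0 tau ltac:(lia)) as [Hid|[s [Ds [Hf [d [Hd Hcd]]]]]].
    - exfalso. apply (Ht3 (S tau)); [lia|]. intros x Hx. rewrite Hid; auto.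
    - assert (Hs : s <= B).
      { destruct (classic (D0 (s - d))) as [Dsd|nDsd].
        + specialize (Hcd Dsd); rewrite (Ht2 _ Dsd) in Hcd; discriminate.
        + unfold D0 in *. unfold B. lia. }
      intros x Hx. rewrite Hf by (unfold D0; lia).
      replace (Z.eqb x s) with false by (symmetry; apply Z.eqb_neq; lia).
      apply Ht2. unfold D0; lia. }
  assert (Hp'' : epath r (fun x => B < x <= z) k (fun t => q (S tau + t)%nat) (j - S tau)).
  { apply epath_restrict with (D := D0) (k := S k).
    - apply (epath_shift r D0 (S k) q m); [split; auto|lia].
    - intros x Hx; unfold D0; lia.
    - intros t Ht. destruct (Hzero (S tau + t)%nat ltac:(lia)) as [v [Hv1 [Hv2 Hv3]]].
      apply amz_remove with (D := D0) (y := v); auto.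
      + intros x Hx; split; [unfold D0; lia|lia].
      + apply Hc0; lia. }
  assert (HD : forall x, (fun x => B < x <= z) x -> B + 1 <= x) by (intros x Hx; cbv beta in Hx; lia).
  assert (Hon : eones (fun x => B < x <= z) ((fun t => q (S tau + t)%nat) 0%nat)).
  { cbv beta. rewrite Nat.add_0_r. exact Hones. }
  assert (Hjm : (j - S tau <= j - S tau)%nat) by lia.
  assert (Hint : forall x, B + 1 <= x <= z -> (fun x => B < x <= z) x) by (intros x Hx; cbv beta; lia).
  assert (Hq' : (fun t => q (S tau + t)%nat) (j - S tau)%nat z = false).
  { cbv beta. replace (S tau + (j - S tau))%nat with j by lia. exact Hq. }
  pose proof (HR _ (B + 1) _ _ HD Hp'' Hon (j - S tau)%nat z Hjm Hint Hq') as Hfin.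
  unfold B in *; lia.
Qed.

Lemma RR_all r k : 0 <= r -> RR r k.
Proof. intros Hr; induction k. apply RR0. apply R_S; auto. Qed.

Lemma maxl_ge a l : In a l -> a <= maxl l.
Proof.
  induction l as [|b l IH]; simpl; [tauto|]. intros [<-|H]; [lia|]. specialize (IH H); lia.
Qed.

Lemma maxl_nonneg l : 0 <= maxl l.
Proof. induction l; simpl; lia. Qed.

Lemma r_bound U X x : In X U -> In x X -> Z.abs x <= range_r U.
Proof.
  intros HX Hx. unfold range_r.
  eapply Z.le_trans; [|apply maxl_ge; apply in_map; exact HX]. cbv beta.
  eapply Z.le_trans; [|apply maxl_ge; apply in_map; right; exact Hx]. cbv beta.
  eapply Z.le_trans; [|apply maxl_ge; apply in_map; left; reflexivity]. cbv beta.
  rewrite Z.sub_0_r; lia.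
Qed.

Lemma legal_emove U Lam D eta eta' : update_family U -> neg1_stable U ->
  (forall x, D x -> Lam x) -> legal_move U Lam eta eta' -> emove (range_r U) D eta eta'.
Proof.
  intros HU Hs HD [<-|[s [Ls [-> [X [HX Hz]]]]]].
  - left; auto.
  - destruct (classic (exists x, In x X /\ ~ 0 < x)) as [[x [Hx Hxp]]|Hn].
    2: { exfalso; apply Hs. exists X; split; auto. intros x Hx.
         destruct (Z_lt_le_dec 0 x); auto. exfalso; apply Hn; exists x; split; auto; lia. }
    assert (x <> 0) by (intro; subst; apply (proj2 (HU X HX)); auto).
    pose proof (r_bound U X x HX Hx).
    destruct (classic (D s)) as [Ds|nDs].
    2: { left. intros y Dy. unfold flip. replace (Z.eqb y s) with false; auto.
         symmetry; apply Z.eqb_neq; intro; subst; auto. }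
    right. exists s. split; [auto|split].
    + intros y _. reflexivity.
    + exists (- x). split; [lia|]. intros Dsx. replace (s - - x) with (s + x) by lia.
      apply Hz; auto. apply HD. replace (s + x) with (s - - x) by lia; auto.
Qed.

Lemma A_eq r k : A r k = r * (2 ^ Z.of_nat k - 1).
Proof.
  induction k as [|k IH]. simpl; lia.
  change (A r (S k)) with (2 * A r k + r). rewrite IH.
  rewrite Nat2Z.inj_succ, Z.pow_succ_r by lia. lia.
Qed.

Lemma b_mono U k : 0 <= range_r U -> b_n U k <= b_n U (S k).
Proof.
  intros Hr. unfold b_n. rewrite Nat2Z.inj_succ.
  assert (H1 : 2 ^ (Z.of_nat k - 1) <= 2 ^ (Z.succ (Z.of_nat k) - 1)) by (apply Z.pow_le_mono_r; lia).
  assert (H2 : 0 <= 2 ^ (Z.of_nat k - 1)) by (apply Z.pow_nonneg; lia).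
  assert (0 <= range_r U * (Z.succ (Z.of_nat k)) * (2 ^ (Z.succ (Z.of_nat k) - 1) - 2 ^ (Z.of_nat k - 1))) by
    (apply Z.mul_nonneg_nonneg; [apply Z.mul_nonneg_nonneg|]; lia).
  assert (0 <= range_r U * 2 ^ (Z.of_nat k - 1)) by (apply Z.mul_nonneg_nonneg; lia).
  nia.
Qed.

Theorem lemma3p1 (U : list (list Z)) (n : nat) :
  update_family U -> neg1_stable U -> (1 <= n)%nat -> H U (n - 1) ->
  forall Lam : Z -> Prop, (forall x, P U n x -> Lam x) ->
  forall eta : config, V U n Lam eta ->
  ~ (forall x, Lam x -> eta x = true) ->
  exists x, Lam x /\ ~ P U (n - 1) x /\ eta x = false.
Proof.
  intros HU Hs Hn _ Lam HP eta [m [p [Hm1 [Hp0 [Hpm [Hleg Hcnt]]]]]] Hne.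
  apply not_all_ex_not in Hne. destruct Hne as [x0 Hx0].
  assert (Lam x0 /\ eta x0 = false) as [Lx0 ex0].
  { destruct (classic (Lam x0)) as [L|nL]; [|exfalso; apply Hx0; intro; contradiction].
    split; auto. apply Bool.not_true_is_false; intro; apply Hx0; auto. }
  destruct (classic (P U (n - 1) x0)) as [Px0|nPx0]; [|exists x0; auto].
  destruct n as [|k]; [lia|]. replace (S k - 1)%nat with k in * by lia.
  set (r := range_r U).
  assert (Hr : 0 <= r) by apply maxl_nonneg.
  assert (Hp : epath r (P U (S k)) (S k) p m).
  { split.
    - intros j Hj. apply legal_emove with (Lam := Lam); auto.
    - intros j Hj. apply amz_sub with (D := Lam); auto. }
  assert (Ha : a_n U (S k) = 2 * a_n U k + r).
  { unfold a_n. fold r. rewrite Nat2Z.inj_succ, Z.pow_succ_r by lia. lia. }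
  assert (Hak : 0 <= a_n U k) by (unfold a_n; rewrite <- A_eq; apply A_nonneg; auto).
  pose proof (b_mono U k Hr) as Hb.
  unfold P in Px0.
  destruct (L_of_R r k Hr (RR_all r k Hr) (P U (S k)) (- a_n U (S k)) p m
     ltac:(intros x Hx; unfold P in Hx; lia) Hp
     ltac:(rewrite Hp0; intros x _; reflexivity) m x0 ltac:(lia) ltac:(lia)
     ltac:(intros x Hx; unfold P; lia) ltac:(rewrite Hpm; exact ex0))
     as [v [Hv1 [Hv2 Hv3]]].
  rewrite A_eq in Hv1. change (r * (2 ^ Z.of_nat k - 1)) with (a_n U k) in Hv1.
  exists v. split; [|split].
  - apply HP. unfold P; lia.
  - unfold P. lia.
  - rewrite <- Hpm; auto.
Qed.
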